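(* Let $U:\mathbb{C}^*\to\mathbb{C}$ be a reasonable expansion with unique restrictions, between locally small categories, which has the expansion property, and assume that all morphisms in $\mathbb{C}$ are monomorphisms and that $\mathbb{C}^*$ is directed. Then for every $A\in\mathrm{Ob}(\mathbb{C})$, $$t_{\mathbb{C}}(A)=\sum_{\mathcal{A}\in U^{-1}(A)}t_{\mathbb{C}^*}(\mathcal{A}).$$ Consequently, $t_{\mathbb{C}}(A)$ is finite if and only if $U^{-1}(A)$ is finite and $t_{\mathbb{C}^*}(\mathcal{A})<\infty$ for all $\mathcal{A}\in U^{-1}(A)$.
   Context: Write $X\to Y$ if $\hom(X,Y)\ne\varnothing$; a category is directed if for all objects $A,B$ there is $C$ with $A\to C$, $B\to C$. An expansion of $\mathbb{C}$ is a category $\mathbb{C}^*$ with a functor $U:\mathbb{C}^*\to\mathbb{C}$ surjective on objects and injective on hom-sets; we regard $\hom_{\mathbb{C}^*}(\mathcal{A},\mathcal{B})\subseteq\hom_{\mathbb{C}}(U\mathcal{A},U\mathcal{B})$, and $U^{-1}(A)=\{\mathcal{A}:U(\mathcal{A})=A\}$. $U$ is reasonable if for every $e\in\hom(A,B)$ and $\mathcal{A}\in U^{-1}(A)$ there is $\mathcal{B}\in U^{-1}(B)$ with $e\in\hom(\mathcal{A},\mathcal{B})$; it has unique restrictions if for every $\mathcal{B}$ and $e\in\hom(A,U(\mathcal{B}))$ there is exactly one $\mathcal{A}\in U^{-1}(A)$ with $e\in\hom(\mathcal{A},\mathcal{B})$; it has the expansion property if for every $A\in\mathrm{Ob}(\mathbb{C})$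 there is $B\in\mathrm{Ob}(\mathbb{C})$ with $\mathcal{A}\to\mathcal{B}$ for all $\mathcal{A}\in U^{-1}(A)$, $\mathcal{B}\in U^{-1}(B)$. In a category $\mathbb{D}$: $C\to(B)^A_{k,t}$ means that for every $\chi:\hom(A,C)\to\{0,\dots,k-1\}$ there is $w\in\hom(B,C)$ with $|\chi(w\cdot\hom(A,B))|\le t$; $t_{\mathbb{D}}(A)$ is the least positive $n$ such that for all $k\ge2$ and all $B$ there is $C$ with $C\to(B)^A_{k,n}$, and $\infty$ otherwise. A sum with an infinite term or infinitely many terms is $\infty$. *)

(* Defs.v *)
From mathcomp Require Import all_boot.
From mathcomp Require Import boolp.
From Stdlib Require List.

Set Implicit Arguments.
Unset Strict Implicit.
Unset Printing Implicit Defensive.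

Record category := Category {
  Ob : Type;
  Hom : Ob -> Ob -> Type;
  comp : forall {A B C : Ob}, Hom B C -> Hom A B -> Hom A C;
  idm : forall A : Ob, Hom A A;
  comp_assoc : forall (A B C D : Ob) (h : Hom C D) (g : Hom B C) (f : Hom A B),
      comp h (comp g f) = comp (comp h g) f;
  comp_idl : forall (A B : Ob) (f : Hom A B), comp (idm B) f = f;
  comp_idr : forall (A B : Ob) (f : Hom A B), comp f (idm A) = f
}.
Arguments comp {c A B C}.
Arguments Hom {c}.

Definition arrow (D : category) (X Y : Ob D) : Prop := inhabited (Hom X Y).

Definition directed (D : category) : Prop :=
  forall A B : Ob D, exists C : Ob D, arrow A C /\ arrow B C.

Definition all_mono (D : category) : Prop :=
  forall (A B C : Ob D) (h : Hom B C) (f g : Hom A B), comp h f = comp h g -> f = g.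

Record functor (D E : category) := Functor {
  Fob : Ob D -> Ob E;
  Fhom : forall {A B : Ob D}, Hom A B -> Hom (Fob A) (Fob B);
  Fcomp : forall (A B C : Ob D) (g : Hom B C) (f : Hom A B),
      Fhom (comp g f) = comp (Fhom g) (Fhom f);
  Fid : forall A : Ob D, Fhom (idm A) = idm (Fob A)
}.
Arguments Fob {D E}.
Arguments Fhom {D E} _ {A B}.

Definition expansion (Cs C : category) (U : functor Cs C) : Prop :=
  (forall A : Ob C, exists As : Ob Cs, Fob U As = A) /\
  (forall (As Bs : Ob Cs) (f g : Hom As Bs), Fhom U f = Fhom U g -> f = g).

(* "e ∈ hom(As, Bs)" for e ∈ hom_C(A,B), with U As = A and U Bs = B:
   e is the image under U of a C*-morphism As -> Bs. *)
Definition lifts (Cs C : category) (U : functor Cs C) (As Bs : Ob Cs)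
    (A B : Ob C) (e : Hom A B) : Prop :=
  exists (p : Fob U As = A) (q : Fob U Bs = B) (e' : Hom As Bs),
    eq_rect _ (fun Y => Hom A Y)
      (eq_rect _ (fun X => Hom X (Fob U Bs)) (Fhom U e') A p) B q = e.

Definition reasonable (Cs C : category) (U : functor Cs C) : Prop :=
  forall (A B : Ob C) (e : Hom A B) (As : Ob Cs), Fob U As = A ->
    exists Bs : Ob Cs, lifts U As Bs e.

Definition unique_restrictions (Cs C : category) (U : functor Cs C) : Prop :=
  forall (Bs : Ob Cs) (A : Ob C) (e : Hom A (Fob U Bs)),
    exists! As : Ob Cs, lifts U As Bs e.

Definition expansion_property (Cs C : category) (U : functor Cs C) : Prop :=
  forall A : Ob C, exists B : Ob C, forall As Bs : Ob Cs,
    Fob U As = A -> Fob U Bs = B -> arrow As Bs.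

Definition ramsey_arrow (D : category) (C B A : Ob D) (k t : nat) : Prop :=
  forall chi : Hom A C -> 'I_k, exists w : Hom B C,
    #|[set i : 'I_k | `[< exists f : Hom A B, chi (comp w f) = i >]]| <= t.

Definition ramsey_bound (D : category) (A : Ob D) (n : nat) : Prop :=
  forall k : nat, 2 <= k -> forall B : Ob D, exists C : Ob D, ramsey_arrow C B A k n.

(* Ramsey degree t_D(A): Some n = least positive n with the property; None = ∞ *)
Definition t_deg (D : category) (A : Ob D) : option nat :=
  match pselect (exists n, `[< 0 < n /\ ramsey_bound A n >]) with
  | left H => Some (ex_minn H)
  | right _ => None
  end.

(* sum in N ∪ {∞} (None = ∞) *)
Definition osum (l : list (option nat)) : option nat :=
  foldr (fun a b => match a, b with Some x, Some y => Some (x + y) | _, _ => None end)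
        (Some 0) l.

Definition fiber_enum (Cs C : category) (U : functor Cs C) (A : Ob C)
    (l : list (Ob Cs)) : Prop :=
  List.NoDup l /\ forall As : Ob Cs, List.In As l <-> Fob U As = A.

Definition fiber_finite (Cs C : category) (U : functor Cs C) (A : Ob C) : Prop :=
  exists l, fiber_enum U A l.

(* \sum_{As ∈ U^{-1}(A)} t_{C*}(As); infinitely many terms gives ∞ *)
Definition fiber_sum (Cs C : category) (U : functor Cs C) (A : Ob C) : option nat :=
  match pselect (fiber_finite U A) with
  | left H => osum (map (@t_deg Cs) (proj1_sig (cid H)))
  | right _ => None
  end.

(* Main.v *)
Require Import Defs.
From mathcomp Require Import all_boot.
From mathcomp Require Import boolp.
From Stdlib Require List.

Set Implicit Arguments.
Unset Strict Implicit.
Unset Printing Implicit Defensive.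

Definition cast (C : category) (X A : Ob C) (p : X = A) (Y : Ob C) (h : Hom X Y) : Hom A Y :=
  eq_rect X (fun Z => Hom Z Y) h A p.

Lemma cast_comp (C : category) (X A : Ob C) (p : X = A) (Y Z : Ob C) (g : Hom Y Z) (h : Hom X Y) :
  cast p (Defs.comp g h) = Defs.comp g (cast p h).
Proof. by case: A / p. Qed.

Lemma cast_inj (C : category) (X A : Ob C) (p : X = A) (Y : Ob C) (h h' : Hom X Y) :
  cast p h = cast p h' -> h = h'.
Proof. by case: A / p. Qed.

Lemma lifts_iff (Cs C : category) (U : functor Cs C) (As Bs : Ob Cs) (A : Ob C)
  (e : Hom A (Fob U Bs)) :
  lifts U As Bs e <-> exists p : Fob U As = A, exists e' : Hom As Bs, cast p (Fhom U e') = e.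
Proof.
split.
- move=> [p [q [e' E]]]; exists p, e'; rewrite -E.
  by have -> : q = erefl by apply: Prop_irrelevance.
- by move=> [p [e' E]]; exists p, erefl, e'.
Qed.

Lemma lifts_comp (Cs C : category) (U : functor Cs C) (As Bs Ds : Ob Cs) (A : Ob C)
  (e : Hom A (Fob U Bs)) (v : Hom Bs Ds) :
  lifts U As Bs e -> lifts U As Ds (Defs.comp (Fhom U v) e).
Proof.
move=> /lifts_iff [p [e' E]]; apply/lifts_iff; exists p, (Defs.comp v e').
by rewrite -E -cast_comp Fcomp.
Qed.

Lemma rb_mono (D : category) (A : Ob D) (n m : nat) :
  n <= m -> ramsey_bound A n -> ramsey_bound A m.
Proof.
move=> nm H k k2 B; have [C HC] := H k k2 B; exists C => chi.
have [w Hw] := HC chi; exists w; exact: leq_trans Hw nm.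
Qed.

Lemma rb0 (D : category) (A : Ob D) : ~ ramsey_bound A 0.
Proof.
move=> /(_ 2 erefl A) [C HC].
have [w Hw] := HC (fun _ => ord0).
set S := [set _ | _] in Hw.
have Hin : (ord0 : 'I_2) \in S by rewrite inE; apply/asboolP; exists (idm A).
by move: Hw; rewrite (cardD1 ord0) Hin.
Qed.

Lemma t_deg_Some (D : category) (A : Ob D) (m : nat) :
  t_deg A = Some m -> [/\ 0 < m, ramsey_bound A m & forall n, 0 < n -> ramsey_bound A n -> m <= n].
Proof.
rewrite /t_deg; case: pselect => // H [<-].
case: ex_minnP => x /asboolP [x0 rx] Hmin; split => // n n0 rn.
by apply: Hmin; apply/asboolP.
Qed.

Lemma t_deg_None (D : category) (A : Ob D) :
  t_deg A = None -> forall n, 0 < n -> ~ ramsey_bound A n.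
Proof.
rewrite /t_deg; case: pselect => // H _ n n0 rn; apply: H; exists n; exact/asboolP.
Qed.

Lemma t_deg_SomeI (D : category) (A : Ob D) (m : nat) :
  0 < m -> ramsey_bound A m -> (forall n, 0 < n -> ramsey_bound A n -> m <= n) ->
  t_deg A = Some m.
Proof.
move=> m0 rm Hm; rewrite /t_deg; case: pselect => [H|H]; last first.
  by exfalso; apply: H; exists m; apply/asboolP.
case: ex_minnP => x /asboolP [x0 rx] Hmin; congr Some; apply/eqP; rewrite eqn_leq.
by rewrite Hm // Hmin //; apply/asboolP.
Qed.

Lemma t_deg_NoneI (D : category) (A : Ob D) :
  (forall n, 0 < n -> ~ ramsey_bound A n) -> t_deg A = None.
Proof.
move=> H; rewrite /t_deg; case: pselect => // H0; exfalso; case: H0 => n /asboolP [n0 rn]; exact: H n n0 rn.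
Qed.
Lemma upper (Cs C : category) (U : functor Cs C) (A : Ob C) (l : seq (Ob Cs)) (ns : Ob Cs -> nat) :
  (forall x, List.In x l -> Fob U x = A) ->
  (forall x, List.In x l -> ramsey_bound x (ns x)) ->
  forall k, 2 <= k -> forall B0 : Ob Cs, exists C0 : Ob Cs, forall chi : Hom A (Fob U C0) -> 'I_k,
   exists w : Hom B0 C0,
   #|[set c : 'I_k | `[< exists f : Hom A (Fob U B0),
        (exists X, List.In X l /\ lifts U X B0 f) /\ chi (Defs.comp (Fhom U w) f) = c >]]|
     <= \sum_(x <- l) ns x.
Proof.
elim: l => [|X l IH] Hfib Hrb k k2 B0.
  exists B0 => chi; exists (idm B0); rewrite big_nil leqn0 cards_eq0; apply/eqP/setP => c.
  by rewrite !inE; apply/asboolP => -[f [[X [F _]] _]].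
have p : Fob U X = A by apply: Hfib; left.
have [C1 H1] := Hrb X (or_introl erefl) k k2 B0.
have [C0 H0] := IH (fun x hx => Hfib x (or_intror hx)) (fun x hx => Hrb x (or_intror hx)) k k2 C1.
exists C0 => chi; have [w2 Hw2] := H0 chi.
pose chiX := fun g : Hom X C1 => chi (Defs.comp (Fhom U w2) (cast p (Fhom U g))).
have [w1 Hw1] := H1 chiX.
exists (Defs.comp w2 w1).
set S := [set c | _].
set S1 := [set c | _] in Hw1.
set S2 := [set c | _] in Hw2.
have sub : S \subset S1 :|: S2.
  apply/subsetP => c; rewrite !inE => /asboolP [f [[X' [HX' Hl]] Hc]].
  case: HX' => [EX|HX'].
  - subst X'; apply/orP; left; apply/asboolP.
    move/lifts_iff: Hl => [p' [g Eg]].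
    have Ep : p' = p by apply: Prop_irrelevance.
    subst p' f; exists g; rewrite /chiX -Hc.
    by rewrite -cast_comp !Fcomp comp_assoc cast_comp.
  - apply/orP; right; apply/asboolP.
    exists (Defs.comp (Fhom U w1) f); split.
      by exists X'; split => //; apply: lifts_comp.
    by rewrite -Hc Fcomp comp_assoc.
rewrite big_cons; apply: leq_trans (subset_leq_card sub) _.
rewrite cardsU; apply: leq_trans (leq_subr _ _) _.
exact: leq_add.
Qed.

Lemma upper_rb (Cs C : category) (U : functor Cs C) (A : Ob C) (l : seq (Ob Cs)) (ns : Ob Cs -> nat) :
  expansion U -> unique_restrictions U ->
  (forall x, List.In x l <-> Fob U x = A) ->
  (forall x, List.In x l -> ramsey_bound x (ns x)) ->
  ramsey_bound A (\sum_(x <- l) ns x).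
Proof.
move=> [Hsurj _] UR Hl Hrb k k2 B.
case: (Hsurj B) => B0 <-.
have [C0 HC0] := upper (fun x hx => proj1 (Hl x) hx) Hrb k2 B0.
exists (Fob U C0) => chi; have [w Hw] := HC0 chi.
exists (Fhom U w); apply: leq_trans Hw; apply: subset_leq_card.
apply/subsetP => c; rewrite !inE => /asboolP [f Hf]; apply/asboolP; exists f; split => //.
have [X [HX _]] := UR B0 A f.
exists X; split => //; apply/Hl.
by move/lifts_iff: HX => [p _].
Qed.
Lemma arrow_trans (D : category) (X Y Z : Ob D) : arrow X Y -> arrow Y Z -> arrow X Z.
Proof. by move=> [f] [g]; constructor; exact: Defs.comp g f. Qed.

Lemma dir_list (D : category) (I : eqType) (F : I -> Ob D) :
  directed D -> forall (s : seq I) (X : Ob D), exists Y, arrow X Y /\ forall i, i \in s -> arrow (F i) Y.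
Proof.
move=> Dir; elim=> [|a s IH] X.
  by exists X; split => //; constructor; exact: idm.
have [Y [XY HY]] := IH X; have [W [YW aW]] := Dir Y (F a).
exists W; split; first exact: arrow_trans XY YW.
move=> i; rewrite in_cons => /orP [/eqP ->|his] //.
exact: arrow_trans (HY i his) YW.
Qed.

Lemma lower (Cs C : category) (U : functor Cs C) (A : Ob C) (I : finType) (As : I -> Ob Cs)
  (t : I -> nat) (k : I -> nat) :
  expansion U -> unique_restrictions U -> expansion_property U -> directed Cs ->
  injective As -> (forall i, Fob U (As i) = A) ->
  (forall i, 2 <= k i) ->
  (forall i, exists Bs : Ob Cs, forall Cs' : Ob Cs, exists chi : Hom (As i) Cs' -> 'I_(k i),
      forall w : Hom Bs Cs', t i <= #|[set c : 'I_(k i) | `[< exists f : Hom (As i) Bs, chi (Defs.comp w f) = c >]]|) ->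
  forall n, ramsey_bound A n -> \sum_i t i <= n.
Proof.
move=> [Hsurj Hinj] UR EP Dir Ainj p k2 Hfail n Hrb.
case: (pickP (@predT I)) => [i0 _ | I0]; last by rewrite big_pred0.
have [Bsf HB] : exists Bsf : I -> Ob Cs, forall i Cs', exists chi : Hom (As i) Cs' -> 'I_(k i),
      forall w : Hom (Bsf i) Cs', t i <= #|[set c : 'I_(k i) | `[< exists f : Hom (As i) (Bsf i), chi (Defs.comp w f) = c >]]|.
  by exists (fun i => proj1_sig (cid (Hfail i))) => i; exact: proj2_sig (cid (Hfail i)).
have [Bb [_ HBb]] := dir_list Bsf Dir (enum I) (Bsf i0).
have [B HB2] := EP (Fob U Bb).
pose m := \max_i k i.
have hk : forall i, k i <= m := fun i => leq_bigmax i.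
have K2 : 2 <= #|{: I * 'I_m}|.
  rewrite card_prod card_ord; have -> : 2 = 1 * 2 by [].
  apply: leq_mul; first by apply/card_gt0P; exists i0.
  exact: leq_trans (k2 i0) (hk i0).
have [C0 HC] := Hrb _ K2 B.
case: (Hsurj C0) => Cc EC; subst C0.
have [chis Hchis] : exists chis : forall i, Hom (As i) Cc -> 'I_(k i), forall i (w : Hom (Bsf i) Cc),
   t i <= #|[set c : 'I_(k i) | `[< exists f : Hom (As i) (Bsf i), chis i (Defs.comp w f) = c >]]|.
  by exists (fun i => proj1_sig (cid (HB i Cc))) => i; exact: proj2_sig (cid (HB i Cc)).
pose enc := fun i (g : Hom (As i) Cc) => enum_rank ((i, widen_ord (hk i) (chis i g)) : I * 'I_m).
pose d0 := enum_rank ((i0, widen_ord (hk i0) (Ordinal (ltnW (k2 i0)))) : I * 'I_m).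
pose chi := fun f : Hom A (Fob U Cc) =>
  match pselect (exists i, exists g : Hom (As i) Cc, cast (p i) (Fhom U g) = f) with
  | left H => enc (proj1_sig (cid H)) (proj1_sig (cid (proj2_sig (cid H))))
  | right _ => d0
  end.
have chiE : forall i g, chi (cast (p i) (Fhom U g)) = enc i g.
  move=> i g; rewrite /chi; case: pselect => [H|H]; last by exfalso; apply: H; exists i, g.
  case: (cid H) => j Hj /=; case: (cid Hj) => g' Eg /=.
  have Eij : j = i.
    apply: Ainj; have [X [_ Hu]] := UR Cc A (cast (p i) (Fhom U g)).
    rewrite -(Hu (As j)); last by apply/lifts_iff; exists (p j), g'.
    by rewrite -(Hu (As i)) //; apply/lifts_iff; exists (p i), g.
  subst j; move/cast_inj: Eg => /Hinj ->; done.
have [w Hw] := HC chi.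
have [X [HX _]] := UR Cc B w.
move/lifts_iff: HX => [pX [w' Ew]].
subst B; rewrite /cast /= in Ew; subst w.
apply: leq_trans Hw.
set S := [set c | _].
pose T := [set x : I * 'I_m | enum_rank x \in S].
have TS : #|T| <= #|S|.
  rewrite -(card_imset T (@enum_rank_inj _)); apply: subset_leq_card.
  by apply/subsetP => y /imsetP [x]; rewrite inE => Hx ->.
apply: leq_trans TS.
have ET : #|T| = \sum_i #|[set c : 'I_m | (i, c) \in T]|.
  under eq_bigr => i _ do rewrite -sum1_card big_mkcond /=.
  rewrite -sum1_card big_mkcond pair_big /=; apply: eq_big => // -[i c] _ /=.
  by rewrite [in RHS]inE.
rewrite ET; apply: leq_sum => i _.
have [u] : arrow (Bsf i) X.
  apply: arrow_trans (HBb i _) (HB2 Bb X erefl erefl); by rewrite mem_enum.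
have := Hchis i (Defs.comp w' u).
set Si := [set c | _] => Hti; apply: leq_trans Hti _.
rewrite -(card_imset Si (f := widen_ord (hk i))); last first.
  by move=> a b E; apply: val_inj; exact: (congr1 val E).
apply: subset_leq_card; apply/subsetP => y /imsetP [c Hc ->]; move: Hc; rewrite /Si inE => /asboolP [g Eg].
rewrite /T /S !inE; apply/asboolP.
exists (cast (p i) (Fhom U (Defs.comp u g))).
by rewrite -cast_comp -Fcomp chiE /enc comp_assoc Eg.
Qed.
Definition FailP (Cs : category) (x : Ob Cs) (t : nat) : Prop :=
  exists k, 2 <= k /\ exists Bs : Ob Cs, forall Cs' : Ob Cs, exists chi : Hom x Cs' -> 'I_k,
      forall w : Hom Bs Cs', t <= #|[set c : 'I_k | `[< exists f : Hom x Bs, chi (Defs.comp w f) = c >]]|.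

Lemma fail_of (Cs : category) (x : Ob Cs) (t : nat) :
  0 < t -> ~ ramsey_bound x t.-1 -> FailP x t.
Proof.
move=> t0 H; apply: contrapT => nF; apply: H => k k2 B; apply: contrapT => nC.
apply: nF; exists k; split => //; exists B => C'; apply: contrapT => nchi.
apply: nC; exists C' => chi; apply: contrapT => nw.
apply: nchi; exists chi => w; apply: contrapT => nle.
apply: nw; exists w; rewrite leqNgt; apply/negP => lt; apply: nle.
by rewrite -(prednK t0).
Qed.

Lemma List_nth_nth (T : Type) (l : seq T) (d : T) (i : nat) : List.nth i l d = nth d l i.
Proof. by elim: l i => [|a l IH] [|i] //=. Qed.

Lemma length_size (T : Type) (l : seq T) : length l = size l.
Proof. by elim: l => //= a l ->. Qed.

Lemma lower_list (Cs C : category) (U : functor Cs C) (A : Ob C) (l : seq (Ob Cs)) (ts : Ob Cs -> nat) :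
  expansion U -> unique_restrictions U -> expansion_property U -> directed Cs ->
  List.NoDup l -> (forall x, List.In x l -> Fob U x = A) ->
  (forall x, List.In x l -> FailP x (ts x)) ->
  forall n, ramsey_bound A n -> \sum_(x <- l) ts x <= n.
Proof.
move=> Hexp UR EP Dir nd Hfib Hfail n rn.
case: l nd Hfib Hfail => [|d l'] nd Hfib Hfail; first by rewrite big_nil.
set l := d :: l' in nd Hfib Hfail *.
have Hin : forall i : 'I_(size l), List.In (nth d l i) l.
  move=> i; rewrite -List_nth_nth; apply: List.nth_In; rewrite length_size.
  by apply/ltP.
pose As := fun i : 'I_(size l) => nth d l i.
have Ainj : injective As.
  move=> i j E; apply: val_inj; move/(List.NoDup_nth l d): nd => H.
  apply: H; rewrite ?length_size; [exact/ltP/ltn_ord|exact/ltP/ltn_ord|by rewrite !List_nth_nth].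
pose kf := fun i => proj1_sig (cid (Hfail _ (Hin i))).
have Hk : forall i, 2 <= kf i /\ _ := fun i => proj2_sig (cid (Hfail _ (Hin i))).
have := @lower Cs C U A _ As (fun i => ts (As i)) kf Hexp UR EP Dir Ainj
  (fun i => Hfib _ (Hin i)) (fun i => proj1 (Hk i)) (fun i => proj2 (Hk i)) n rn.
by rewrite (big_nth d) big_mkord.
Qed.
Lemma inf_list (Cs C : category) (U : functor Cs C) (A : Ob C) :
  ~ fiber_finite U A -> forall m, exists l : seq (Ob Cs),
    [/\ List.NoDup l, size l = m & forall x, List.In x l -> Fob U x = A].
Proof.
move=> nf; elim=> [|m [l [nd sz Hl]]].
  by exists [::]; split => //; constructor.
have : ~ (forall x, List.In x l <-> Fob U x = A) by move=> H; apply: nf; exists l.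
move/existsNP => [x Hx].
have nin : ~ List.In x l by move=> hin; apply: Hx; split => // _; exact: Hl.
have fx : Fob U x = A.
  by apply: contrapT => nfx; apply: Hx; split => // /nfx.
exists (x :: l); split; first by constructor.
  by rewrite /= sz.
by move=> y [<-|hy] //; exact: Hl.
Qed.

Lemma osum_Some (Cs : category) (l : seq (Ob Cs)) (tv : Ob Cs -> nat) :
  (forall x, List.In x l -> t_deg x = Some (tv x)) ->
  osum (map (@t_deg Cs) l) = Some (\sum_(x <- l) tv x).
Proof.
elim: l => [|a l IH] H; first by rewrite big_nil.
rewrite /= big_cons H; last by left.
by rewrite IH // => x hx; apply: H; right.
Qed.

Lemma osum_None (Cs : category) (l : seq (Ob Cs)) (x : Ob Cs) :
  List.In x l -> t_deg x = None -> osum (map (@t_deg Cs) l) = None.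
Proof.
elim: l => [|a l IH] //= [<-|hx] hN; first by rewrite hN.
by rewrite IH //; case: (t_deg a).
Qed.

Lemma sum_in_ge (T : Type) (l : seq T) (F : T -> nat) (x : T) :
  List.In x l -> F x <= \sum_(y <- l) F y.
Proof.
elim: l => [|a l IH] //= [<-|hx]; rewrite big_cons; first exact: leq_addr.
exact: leq_trans (IH hx) (leq_addl _ _).
Qed.

Theorem theorem6p3 (Cs C : category) (U : functor Cs C) :
  expansion U -> reasonable U -> unique_restrictions U -> expansion_property U ->
  all_mono C -> directed Cs ->
  forall A : Ob C,
    t_deg A = fiber_sum U A /\
    (t_deg A <> None <->
       (fiber_finite U A /\ forall As : Ob Cs, Fob U As = A -> t_deg As <> None)).
Proof.
move=> Hexp _ UR EP _ Dir A.
have Hsurj := proj1 Hexp.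
case: (pselect (fiber_finite U A /\ forall As : Ob Cs, Fob U As = A -> t_deg As <> None))
  => [[Hfin Hall] | nP].
- have Hfs : forall l, fiber_enum U A l ->
    t_deg A = osum (map (@t_deg Cs) l) /\ t_deg A <> None.
    move=> l [nd Hl].
    pose tv := fun x : Ob Cs => odflt 0 (t_deg x).
    have Htv : forall x, List.In x l -> t_deg x = Some (tv x).
      move=> x /Hl /Hall; rewrite /tv; by case: (t_deg x).
    suff Hs : t_deg A = Some (\sum_(x <- l) tv x) by rewrite (osum_Some Htv) Hs.
    apply: t_deg_SomeI.
    + have [X hX] := Hsurj A.
      have hXl : List.In X l by apply/Hl.
      apply: leq_trans (sum_in_ge tv hXl).
      by have [] := t_deg_Some (Htv X hXl).
    + apply: upper_rb Hexp UR Hl _ => x hx.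
      by have [] := t_deg_Some (Htv x hx).
    + move=> n n0 rn; refine (lower_list Hexp UR EP Dir nd (fun x hx => proj1 (Hl x) hx) _ rn).
      move=> x hx; have [t0 rt tmin] := t_deg_Some (Htv x hx).
      apply: fail_of => // rt'.
      case E: (tv x).-1 => [|j]; first by rewrite E in rt'; exact: rb0 rt'.
      have := tmin _ (ltn0Sn j); rewrite -E => /(_ rt').
      by rewrite -{1}(prednK t0) ltnn.
  have E : t_deg A = fiber_sum U A.
    rewrite /fiber_sum; case: pselect => [H|//].
    by apply: (proj1 (Hfs _ _)); exact: proj2_sig (cid H).
  split => //; split => // _.
  by case: Hfin => l /Hfs [].
- have HN : t_deg A = None.
    apply: t_deg_NoneI => n n0 rn.
    case: (pselect (fiber_finite U A)) => [Hfin|Hinf].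
    + have [X [hX hN]] : exists X, Fob U X = A /\ t_deg X = None.
        apply: contrapT => nx; apply: nP; split => // X hX hN; apply: nx; exists X.
        by split => //; case: (t_deg X) hN.
      have H := lower_list (ts := fun _ => n.+1) Hexp UR EP Dir (l := [:: X]) _ _ _ rn.
      rewrite big_seq1 ltnn in H; apply: notF; apply: H.
      * by constructor; [case | constructor].
      * by move=> x [<-|[]].
      * move=> x [<-|[]]; apply: fail_of => //; exact: t_deg_None hN n n0.
    + have [l [nd sz Hl]] := inf_list Hinf n.+1.
      have H := lower_list (ts := fun _ => 1) Hexp UR EP Dir nd Hl _ rn.
      rewrite sum1_size sz ltnn in H; apply: notF; apply: H.
      move=> x _; apply: fail_of => //; exact: rb0.
  split.
    rewrite HN /fiber_sum; case: pselect => // H; case: (cid H) => l [nd Hl] /=.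
    have [X [hX hN]] : exists X, Fob U X = A /\ t_deg X = None.
      apply: contrapT => nx; apply: nP; split => // X hX hN; apply: nx; exists X.
      by split => //; case: (t_deg X) hN.
    apply/esym/(osum_None (x := X)) => //; exact/Hl.
  by rewrite HN; split.
Qed.
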